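(* Let $V$ be a finite-dimensional scalar product space and $T$ a self-adjoint operator on $V$. Fix an eigenvalue $\lambda$ of $T$ and let $U=(T-\lambda I)|_{K_\lambda}$. If $k\ge 0$ is an integer with $U^k\neq 0$, then there exists $x\in K_\lambda$ such that $\langle U^k x,x\rangle\neq 0$.
   Context: A scalar product is a non-degenerate symmetric bilinear form $\langle\cdot,\cdot\rangle$ over $\mathbb{R}$ or $\mathbb{C}$ (bilinear, not Hermitian, in the complex case). $T$ is self-adjoint if $\langle Tx,y\rangle=\langle x,Ty\rangle$ for all $x,y$. If $V$ is real, eigenvalues (possibly non-real) and generalized eigenspaces are taken in the complexification $V^{\mathbb{C}}$ with the complex-bilinear extension of the scalar product and of $T$. The generalized eigenspace is $K_\lambda=\{x:(T-\lambda I)^m x=0\text{ for some positive integer }m\}$. *)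

(* Defs.v *)
From HB Require Import structures.
From mathcomp Require Import all_boot all_order all_algebra.
From mathcomp Require Import complex.
Set Implicit Arguments. Unset Strict Implicit. Unset Printing Implicit Defensive.
Import GRing.Theory.
Local Open Scope ring_scope.

(* A finite-dimensional space V over F is modelled as column vectors 'cV[F]_n;
   a scalar product <x,y> = x^T B y is given by its Gram matrix B. *)
Definition sform (F : fieldType) (n : nat) (B : 'M[F]_n) (x y : 'cV[F]_n) : F :=
  (x^T *m B *m y) 0 0.

Definition scalar_product (F : fieldType) (n : nat) (B : 'M[F]_n) : Prop :=
  B^T = B /\ B \in unitmx.

Definition self_adjoint (F : fieldType) (n : nat) (B T : 'M[F]_n) : Prop :=
  forall x y : 'cV[F]_n, sform B (T *m x) y = sform B x (T *m y).

Definition is_eigenvalue (F : fieldType) (n : nat) (T : 'M[F]_n) (l : F) : Prop :=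
  exists2 x : 'cV[F]_n, x != 0 & T *m x = l *: x.

Definition shiftpow (F : fieldType) (n : nat) (T : 'M[F]_n) (l : F) (m : nat)
  (x : 'cV[F]_n) : 'cV[F]_n := iter m (fun v => (T - l%:M) *m v) x.

Definition in_gen_eigenspace (F : fieldType) (n : nat) (T : 'M[F]_n) (l : F)
  (x : 'cV[F]_n) : Prop := exists m : nat, (0 < m)%N /\ shiftpow T l m x = 0.

(* Core statement over a field F (used with F = C = R[i]):
   U = (T - l I)|_{K_l};  U^k <> 0  ->  exists x in K_l, <U^k x, x> <> 0. *)
Definition thm_statement (F : fieldType) (n : nat) (B T : 'M[F]_n) : Prop :=
  scalar_product B -> self_adjoint B T ->
  forall (l : F), is_eigenvalue T l ->
  forall k : nat,
    (exists2 y, in_gen_eigenspace T l y & shiftpow T l k y != 0) ->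
    exists2 x, in_gen_eigenspace T l x & sform B (shiftpow T l k x) x != 0.

Definition complexify (R : rcfType) (m n : nat) (A : 'M[R]_(m, n)) : 'M[R[i]]_(m, n) :=
  map_mx (fun r : R => (r%:C)%C) A.

(* Main.v *)
Require Import Defs.
From HB Require Import structures.
From mathcomp Require Import all_boot all_order all_algebra.
From mathcomp Require Import complex.
From mathcomp Require Import ring.
Import GRing.Theory Num.Theory.
Local Open Scope ring_scope.

Lemma shiftpowE (F : fieldType) n (T : 'M[F]_n) l m x :
  shiftpow T l m x = (T - l%:M) ^+ m *m x.
Proof.
elim: m => [|m IH]; first by rewrite expr0 mul1mx.
by rewrite /shiftpow iterS -/(shiftpow T l m x) IH exprS mulmxA.
Qed.

Lemma sformC (F : fieldType) n (B : 'M[F]_n) x y : B^T = B -> sform B x y = sform B y x.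
Proof.
move=> hB; rewrite /sform -[in LHS](trmxK (x^T *m B *m y)) mxE.
by rewrite !trmx_mul hB trmxK mulmxA.
Qed.

Lemma sform_sa (F : fieldType) n (B M : 'M[F]_n) x y :
  M^T *m B = B *m M -> sform B (M *m x) y = sform B x (M *m y).
Proof.
by move=> h; rewrite /sform trmx_mul -(mulmxA x^T) h !mulmxA.
Qed.

Lemma sa_mat (F : fieldType) n (B T : 'M[F]_n) :
  self_adjoint B T -> T^T *m B = B *m T.
Proof.
move=> h; apply/matrixP => i j.
have E (M : 'M[F]_n) : ((delta_mx i 0 : 'cV[F]_n)^T *m M *m (delta_mx j 0 : 'cV[F]_n)) 0 0 = M i j.
  by rewrite trmx_delta -rowE -colE !mxE.
rewrite -E -(E (B *m T)) !mulmxA.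
by have := h (delta_mx i 0) (delta_mx j 0); rewrite /sform trmx_mul !mulmxA.
Qed.

Lemma sa_horner (F : fieldType) n (B T : 'M[F]_n.+1) :
  T^T *m B = B *m T -> forall p, (horner_mx T p)^T *m B = B *m horner_mx T p.
Proof.
move=> hT; elim/poly_ind => [|p c IH]; first by rewrite rmorph0 trmx0 mul0mx mulmx0.
rewrite rmorphD rmorphM /= horner_mx_X horner_mx_C -mulmxE.
rewrite linearD /= trmx_mul tr_scalar_mx mulmxDl mulmxDr scalar_mxC.
congr (_ + _).
have hc : comm_mx T (horner_mx T p) by apply: comm_mx_horner.
by rewrite -mulmxA IH mulmxA hT -mulmxA hc mulmxA.
Qed.

Lemma sformDl (F : fieldType) n (B : 'M[F]_n) x1 x2 y :
  sform B (x1 + x2) y = sform B x1 y + sform B x2 y.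
Proof. by rewrite /sform linearD /= !mulmxDl mxE. Qed.

Lemma sformDr (F : fieldType) n (B : 'M[F]_n) x y1 y2 :
  sform B x (y1 + y2) = sform B x y1 + sform B x y2.
Proof. by rewrite /sform !mulmxDr mxE. Qed.

Lemma main_field (F : fieldType) n (B T : 'M[F]_n.+1) (h2 : (2%:R : F) != 0) :
  B^T = B -> B \in unitmx -> T^T *m B = B *m T ->
  forall l k y, in_gen_eigenspace T l y -> shiftpow T l k y != 0 ->
  exists2 x, in_gen_eigenspace T l x & sform B (shiftpow T l k x) x != 0.
Proof.
move=> hBs hBu hT l k y [m0 [m0p hy]] hw.
rewrite shiftpowE in hy; rewrite shiftpowE in hw.
set N := T - l%:M in hy hw *.
have hN : N = horner_mx T ('X - l%:P) by rewrite rmorphB /= horner_mx_X horner_mx_C.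
have hNp m : N ^+ m = horner_mx T (('X - l%:P)^+m) by rewrite rmorphXn /= hN.
set w := N ^+ k *m y in hw.
have [v hv] : exists v, sform B w v != 0.
  case: (pickP (fun j => (w^T *m B) 0 j != 0)) => [j hj | H].
    by exists (delta_mx j 0); rewrite /sform -colE mxE.
  have h0 : w^T *m B = 0.
    apply/matrixP => i j; rewrite ord1 [RHS]mxE.
    by have := H j => /= /negbFE/eqP.
  have : w^T = 0 by rewrite -[w^T]mulmx1 -(mulmxV hBu) mulmxA h0 mul0mx.
  move/(congr1 trmx); rewrite trmxK trmx0 => w0.
  by move: hw; rewrite w0 eqxx.
have [a [q hq hp]] := multiplicity_XsubC (char_poly T) l.
have hq' : ~~ root q l by move: hq; rewrite monic_neq0 // char_poly_monic.
have hcop : coprimep q (('X - l%:P)^+m0) by apply: coprimep_expr; rewrite coprimep_XsubC.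
have [[u1 u2] /= hu] := Bezout_coprimepP _ _ hcop.
case/eqpf_eq: hu => c hc0 hu.
pose E := c^-1 *: horner_mx T (u1 * q).
have hE : E = 1%:M - (c^-1 *: horner_mx T u2) *m N^+m0.
  rewrite /E (_ : u1 * q = c *: 1 - u2 * ('X - l%:P)^+m0); last by rewrite -hu addrK.
  rewrite rmorphB rmorphM /= -hNp alg_polyC horner_mx_C scalerBr scale_scalar_mx.
  by rewrite mulVf // scalerAl.
have hEy : E *m y = y.
  by rewrite hE mulmxBl mul1mx -mulmxA hy mulmx0 subr0.
have hEw : E *m w = w.
  have hw0 : N^+m0 *m w = 0.
    by rewrite /w mulmxA mulmxE -exprD addnC exprD -mulmxE -mulmxA hy mulmx0.
  by rewrite hE mulmxBl mul1mx -mulmxA hw0 mulmx0 subr0.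
have hEK u : N ^+ a.+1 *m (E *m u) = 0.
  rewrite mulmxA /E -scalemxAr hNp mulmxE -rmorphM /=.
  have -> : ('X - l%:P) ^+ a.+1 * (u1 * q) = ('X - l%:P) * u1 * char_poly T.
    by rewrite hp exprSr; ring.
  by rewrite rmorphM /= Cayley_Hamilton mulr0 scaler0 mul0mx.
have saE : E^T *m B = B *m E.
  by rewrite /E linearZ /= -scalemxAl sa_horner // -scalemxAr.
have saN : (N^+k)^T *m B = B *m N^+k by rewrite hNp sa_horner.
pose z := E *m v.
have hz : sform B w z != 0 by rewrite /z -sform_sa // hEw.
have Qsym x1 x2 : sform B (N^+k *m x1) x2 = sform B (N^+k *m x2) x1.
  by rewrite sform_sa // sformC.
have inz : in_gen_eigenspace T l z by exists a.+1; split => //; rewrite shiftpowE hEK.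
have iny : in_gen_eigenspace T l y by exists m0; split => //; rewrite shiftpowE.
case: (eqVneq (sform B (N^+k *m y) y) 0) => [hyy | hyy]; last first.
  by exists y => //; rewrite shiftpowE.
case: (eqVneq (sform B (N^+k *m z) z) 0) => [hzz | hzz]; last first.
  by exists z => //; rewrite shiftpowE.
exists (y + z).
  exists (m0 + a.+1)%N; split; first by rewrite addnS.
  have e1 : N^+(m0 + a.+1) *m y = 0.
    by rewrite addnC exprD -mulmxE -mulmxA hy mulmx0.
  have e2 : N^+(m0 + a.+1) *m z = 0.
    by rewrite exprD -mulmxE -mulmxA hEK mulmx0.
  by rewrite shiftpowE mulmxDr e1 e2 addr0.
rewrite shiftpowE mulmxDr !sformDl !sformDr hyy hzz add0r addr0 (Qsym z y).
by rewrite -mulr2n -mulr_natr mulf_neq0.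
Qed.

Theorem mainTheorem4 (R : rcfType) (n : nat) :
  (forall B T : 'M[R[i]]_n, thm_statement B T) /\
  (forall B T : 'M[R]_n, scalar_product B -> self_adjoint B T ->
     thm_statement (complexify B) (complexify T)).
Proof.
have H1 : forall B T : 'M[R[i]]_n, thm_statement B T.
  move=> B T [hBs hBu] hsa l _ k [y iny hy].
  case: n B T hBs hBu hsa y iny hy => [|n] B T hBs hBu hsa y iny hy.
    exfalso; move: hy; set u := shiftpow _ _ _ _.
    have -> : u = 0 by apply/matrixP => [[]].
    by rewrite eqxx.
  apply: (@main_field _ _ B T _ hBs hBu _ l k y iny hy); first by rewrite pnatr_eq0.
  exact: sa_mat.
split => // B T _ _; exact: H1.
Qed.
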